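(* There exists $\varphi_0>\frac{2\pi}{3}$ such that for every $s\in\mathbb C\setminus\{0\}$ with $|\arg s|<\varphi_0$ there exists $\sigma>0$ with $s\in\Omega_\sigma$.
   Context: For $\sigma>0$: $\Omega^1_\sigma=\{s:\Re s\le0,\ \sigma<|\Im s|\}\cup\{s:\Re s>0,\ \sigma<|s|\}$; $\Omega^2_\sigma=\{s:\ \sigma<|s|+\Re s,\ \sigma>\frac{-\Re(s)|s|}{2(|s|+\Re s)}\}$; $\Omega^3_\sigma=\{s\neq0:\ \sigma(|s|-\sigma+\Re s)-(\sigma(1+\frac{\Re s}{|s|})+\frac12\Re s)^2>0\}$; $\Omega_\sigma=\Omega^1_\sigma\cap(\Omega^2_\sigma\cup\Omega^3_\sigma)$. *)

(* Defs.v *)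
(* complex numbers s = x + i y are represented by the pair of
   reals (x, y), with Re s = x, Im s = y, |s| = sqrt (x^2 + y^2). *)
From Stdlib Require Import Reals Lra.
Open Scope R_scope.

Definition cmod (x y : R) : R := sqrt (x ^ 2 + y ^ 2).

(* Principal argument arg s in (-PI, PI] (the usual atan2); arg 0 := 0. *)
Definition carg (x y : R) : R :=
  if Rlt_dec 0 x then atan (y / x)
  else if Rlt_dec x 0 then
    (if Rle_dec 0 y then atan (y / x) + PI else atan (y / x) - PI)
  else if Rlt_dec 0 y then PI / 2
  else if Rlt_dec y 0 then - (PI / 2)
  else 0.

Definition Omega1 (sigma x y : R) : Prop :=
  (x <= 0 /\ sigma < Rabs y) \/ (0 < x /\ sigma < cmod x y).

Definition Omega2 (sigma x y : R) : Prop :=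
  sigma < cmod x y + x /\
  sigma > (- x * cmod x y) / (2 * (cmod x y + x)).

Definition Omega3 (sigma x y : R) : Prop :=
  (x, y) <> (0, 0) /\
  sigma * (cmod x y - sigma + x)
    - (sigma * (1 + x / cmod x y) + (1 / 2) * x) ^ 2 > 0.

Definition Omega (sigma x y : R) : Prop :=
  Omega1 sigma x y /\ (Omega2 sigma x y \/ Omega3 sigma x y).

(* Main.v *)
Require Import Defs.
From Stdlib Require Import Reals Lra Psatz.
Open Scope R_scope.

Lemma atan_lt_PI3 : atan (8/5) < PI / 3.
Proof.
  assert (H3 : 8/5 < sqrt 3).
  { rewrite <- (sqrt_pow2 (8/5)) by lra. apply sqrt_lt_1_alt; lra. }
  rewrite <- (atan_tan (PI/3)).
  - rewrite tan_PI3. now apply atan_increasing.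
  - split; pose proof PI_RGT_0; lra.
Qed.

Lemma cmod_pos x y : (x, y) <> (0, 0) -> 0 < cmod x y.
Proof.
  intro H. unfold cmod. apply sqrt_lt_R0.
  destruct (Req_dec x 0) as [->|Hx].
  - destruct (Req_dec y 0) as [->|Hy]; [contradiction|]. nra.
  - nra.
Qed.

Lemma cmod_sq x y : cmod x y * cmod x y = x^2 + y^2.
Proof. unfold cmod. apply sqrt_sqrt. nra. Qed.

Lemma neg_case x y : x < 0 -> Rabs (carg x y) < PI - atan (8/5) ->
  y * y > (8/5)^2 * (x * x).
Proof.
  intros Hx H. unfold carg in H.
  destruct (Rlt_dec 0 x); [lra|].
  destruct (Rlt_dec x 0); [|lra].
  pose proof (atan_bound (y/x)). pose proof PI_RGT_0.
  assert (Hyx : y = (y/x) * x) by (field; lra).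
  destruct (Rle_dec 0 y).
  - rewrite Rabs_right in H by lra.
    assert (y/x < -(8/5)).
    { destruct (Rlt_le_dec (y/x) (-(8/5))) as [h|h]; auto.
      destruct h as [h|h].
      - apply atan_increasing in h. rewrite atan_opp in h. lra.
      - rewrite <- h, atan_opp in H. lra. }
    assert (E : y*y = (y/x)*(y/x)*(x*x)) by (field; lra).
    rewrite E. assert (0 < x*x) by nra. assert ((y/x)*(y/x) > (8/5)^2) by nra. nra.
  - rewrite Rabs_left in H by lra.
    assert (y/x > 8/5).
    { destruct (Rlt_le_dec (8/5) (y/x)) as [h|h]; auto.
      destruct h as [h|h].
      - apply atan_increasing in h. lra.
      - rewrite <- h in H. lra. }
    assert (E : y*y = (y/x)*(y/x)*(x*x)) by (field; lra).
    rewrite E. assert (0 < x*x) by nra. assert ((y/x)*(y/x) > (8/5)^2) by nra. nra.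
Qed.

Theorem mainTheorem10 :
  exists phi0 : R, 2 * PI / 3 < phi0 /\
    forall x y : R, (x, y) <> (0, 0) ->
      Rabs (carg x y) < phi0 ->
      exists sigma : R, 0 < sigma /\ Omega sigma x y.
Proof.
  exists (PI - atan (8/5)). split.
  { pose proof atan_lt_PI3. lra. }
  intros x y Hne Harg.
  pose proof (cmod_pos x y Hne) as Hr. pose proof (cmod_sq x y) as Hr2.
  set (r := cmod x y) in *.
  assert (Er : cmod x y = r) by reflexivity. clearbody r.
  destruct (Rlt_le_dec x 0) as [Hx|Hx].
  - pose proof (neg_case x y Hx Harg) as Hy.
    assert (Hru : r >= -(9/5) * x) by nra.
    exists (3/10 * r). split; [lra|]. split.
    + left. split; [lra|].
      assert (Hay : 0 < Rabs y) by (apply Rabs_pos_lt; intro; subst; nra).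
      assert (Rabs y * Rabs y = y * y) by (rewrite <- Rabs_mult; apply Rabs_right; nra).
      nra.
    + right. split; [exact Hne|].
      unfold Omega3. rewrite Er.
      replace (3 / 10 * r * (1 + x / r)) with (3/10 * (r + x))
        by (field; lra).
      assert (EE : 3 / 10 * r * (r - 3 / 10 * r + x) - (3 / 10 * (r + x) + 1 / 2 * x) ^ 2 = 12/100*(r*r) - 18/100*(r*x) - 64/100*(x*x)) by field.
      rewrite EE.
      assert (r*r > 356/100*(x*x)) by (simpl in Hr2; nra).
      assert (-(r*x) >= 9/5*(x*x)) by nra.
      nra.
  - exists (r / 2). split; [lra|]. split.
    + destruct Hx as [Hx|Hx].
      * right. unfold Omega1; rewrite Er. split; [lra|]. lra.
      * subst x. left. split; [lra|].
        assert (r = Rabs y).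
        { assert (Rabs y * Rabs y = y * y) by (rewrite <- Rabs_mult; apply Rabs_right; nra).
          pose proof (Rabs_pos y). nra. }
        lra.
    + left. unfold Omega2; rewrite Er. split; [lra|].
      unfold Rgt. apply Rle_lt_trans with 0; [|lra].
      assert (0 < / (2 * (r + x))) by (apply Rinv_0_lt_compat; lra).
      unfold Rdiv. assert (0 <= x * r) by nra. nra.
Qed.
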